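(* Let $\omega_0,\alpha,\omega_d>0$, $J_0=\begin{bmatrix}0&\omega_0\\-\omega_0&0\end{bmatrix}$, $\tilde\Lambda=\begin{bmatrix}0&0\\0&-\frac{\alpha}{2}\end{bmatrix}$, and consider the system on $\mathbb{R}^3$ $$\dot{\bar z}=(J_0+\tilde\Lambda)\bar z+(e^{\hat d}-1)\tilde\Lambda\bar z,\qquad \dot{\hat d}=-\omega_d(e^{\hat d}-1).$$ Let $$P=\begin{bmatrix}\frac{\alpha}{4\omega_0^2}+\frac{2}{\alpha}&\frac{1}{2\omega_0}\\ \frac{1}{2\omega_0}&\frac{2}{\alpha}\end{bmatrix},\qquad G=P\tilde\Lambda+\tilde\Lambda^\top P,\qquad b=\frac{\|G\|^2}{2\lambda_{\min}(P)},$$ where $\|G\|$ is the spectral norm and $\lambda_{\min}(P)$ the smallest eigenvalue of $P$. Then $P=P^\top>0$, $P(J_0+\tilde\Lambda)+(J_0+\tilde\Lambda)^\top P=-I$, and the function $$V(\bar z,\hat d)=\ln(1+\bar z^\top P\bar z)+\frac{b}{\omega_d}(e^{\hat d}-\hat d-1)$$ satisfies, along trajectories of the system, for all $(\bar z,\hat d)\in\mathbb{R}^2\times\mathbb{R}$, $$\dot V\le\frac{-\frac12|\bar z|^2-b(e^{\hat d}-1)^2}{1+\bar z^\top P\bar z}.$$ *)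

(* Defs.v *)
From HB Require Import structures.
From mathcomp Require Import all_boot all_order all_algebra.
From mathcomp Require Import all_classical all_reals all_analysis.
Set Implicit Arguments. Unset Strict Implicit. Unset Printing Implicit Defensive.
Import Order.TTheory GRing.Theory Num.Theory.
Local Open Scope ring_scope.
Local Open Scope classical_set_scope.

Section Defs.
Variable R : realType.

Definition mx2 (a b c d : R) : 'M[R]_2 :=
  \matrix_(i < 2, j < 2) nth 0 (nth [::] [:: [:: a; b]; [:: c; d]] i) j.

Definition eucl_norm n (v : 'cV[R]_n) : R := Num.sqrt (\sum_i v i 0 ^+ 2).

Definition qform n (A : 'M[R]_n) (x : 'cV[R]_n) : R := (x^T *m A *m x) 0 0.

Definition spectral_norm m n (A : 'M[R]_(m, n)) : R :=
  sup [set eucl_norm (A *m x) | x in [set x : 'cV[R]_n | eucl_norm x = 1]].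

Definition lambda_min n (A : 'M[R]_n) : R := inf [set a : R | eigenvalue A a].

Definition posdef n (A : 'M[R]_n) : Prop :=
  A^T = A /\ forall x : 'cV[R]_n, x != 0 -> 0 < qform A x.

Definition J0 (w0 : R) : 'M[R]_2 := mx2 0 w0 (- w0) 0.
Definition Lam (al : R) : 'M[R]_2 := mx2 0 0 0 (- (al / 2)).
Definition Pmat (w0 al : R) : 'M[R]_2 :=
  mx2 (al / (4 * w0 ^+ 2) + 2 / al) (1 / (2 * w0)) (1 / (2 * w0)) (2 / al).
Definition Gmat (w0 al : R) : 'M[R]_2 :=
  Pmat w0 al *m Lam al + (Lam al)^T *m Pmat w0 al.
Definition bconst (w0 al : R) : R :=
  spectral_norm (Gmat w0 al) ^+ 2 / (2 * lambda_min (Pmat w0 al)).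

Definition fz (w0 al : R) (z : 'cV[R]_2) (d : R) : 'cV[R]_2 :=
  (J0 w0 + Lam al) *m z + (expR d - 1) *: (Lam al *m z).
Definition fd (wd : R) (d : R) : R := - wd * (expR d - 1).

Definition Vfun (w0 al wd : R) (z : 'cV[R]_2) (d : R) : R :=
  ln (1 + qform (Pmat w0 al) z) + bconst w0 al / wd * (expR d - d - 1).

(* V restricted to the line through (z,d) in the direction of the vector field;
   its derivative at t = 0 is \dot V(z,d) *)
Definition Vline (w0 al wd : R) (z : 'cV[R]_2) (d : R) (t : R) : R :=
  Vfun w0 al wd (z + t *: fz w0 al z d) (d + t * fd wd d).

End Defs.

(* Main.v *)
Require Import Defs.
From HB Require Import structures.
From mathcomp Require Import all_boot all_order all_algebra.
From mathcomp Require Import all_classical all_reals all_analysis.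
From mathcomp Require Import ring lra.
Import Order.TTheory GRing.Theory Num.Theory.
Local Open Scope ring_scope.

Section Helpers.
Set Implicit Arguments.
Context {R : realType}.
Local Open Scope classical_set_scope.

Implicit Types (a b c d : R).

Lemma lift01 : lift ord0 (ord0 : 'I_1) = 1 :> 'I_2. Proof. by apply/val_inj. Qed.
Lemma ord00 : ord0 = 0 :> 'I_2. Proof. by apply/val_inj. Qed.

Lemma mx2E a b c d : (mx2 a b c d 0 0 = a) * (mx2 a b c d 0 1 = b)
   * (mx2 a b c d 1 0 = c) * (mx2 a b c d 1 1 = d).
Proof. by rewrite !mxE. Qed.

Lemma mx2_eta (A : 'M[R]_2) : A = mx2 (A 0 0) (A 0 1) (A 1 0) (A 1 1).
Proof.
apply/matrixP => i j; rewrite mxE.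
case: i => [[|[|//]] Hi]; case: j => [[|[|//]] Hj] /=;
 by congr (A _ _); apply/val_inj.
Qed.

Lemma mx2_mul a b c d a' b' c' d' :
  mx2 a b c d *m mx2 a' b' c' d' =
  mx2 (a*a' + b*c') (a*b' + b*d') (c*a' + d*c') (c*b'+d*d').
Proof.
rewrite [LHS]mx2_eta !mxE !big_ord_recl !big_ord0 !mxE /=. by rewrite !addr0.
Qed.

Lemma mx2_add a b c d a' b' c' d' :
  mx2 a b c d + mx2 a' b' c' d' = mx2 (a+a') (b+b') (c+c') (d+d').
Proof. by rewrite [LHS]mx2_eta !mxE. Qed.

Lemma mx2_tr a b c d : (mx2 a b c d)^T = mx2 a c b d.
Proof. by rewrite [LHS]mx2_eta !mxE. Qed.

Lemma mx2_opp1 : - 1%:M = mx2 (-1) 0 0 (-1) :> 'M[R]_2.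
Proof. by rewrite [LHS]mx2_eta !mxE /= oppr0. Qed.

Lemma mx2_vec a b c d (z : 'cV[R]_2) :
  ((mx2 a b c d *m z) 0 0 = a * z 0 0 + b * z 1 0) *
  ((mx2 a b c d *m z) 1 0 = c * z 0 0 + d * z 1 0).
Proof. by rewrite !mxE !big_ord_recl !big_ord0 !mxE /= !addr0 lift01 ord00. Qed.

Lemma qformE a b c d (z : 'cV[R]_2) :
  qform (mx2 a b c d) z = z 0 0 * (a * z 0 0 + b * z 1 0) + z 1 0 * (c * z 0 0 + d * z 1 0).
Proof.
rewrite /qform -mulmxA !mxE !big_ord_recl !big_ord0 /= !addr0 !mxE.
by rewrite !big_ord_recl !big_ord0 !mxE /= !addr0 lift01 ord00.
Qed.

Lemma euclE (z : 'cV[R]_2) : eucl_norm z = Num.sqrt (z 0 0 ^+ 2 + z 1 0 ^+ 2).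
Proof. by rewrite /eucl_norm !big_ord_recl big_ord0 addr0 lift01 ord00. Qed.


Lemma rowmx2 a b c d (v : 'rV[R]_2) :
  ((v *m mx2 a b c d) 0 0 = v 0 0 * a + v 0 1 * c) *
  ((v *m mx2 a b c d) 0 1 = v 0 0 * b + v 0 1 * d).
Proof. by rewrite !mxE !big_ord_recl !big_ord0 !mxE /= !addr0 lift01 ord00. Qed.

Lemma eig2 p r s a : eigenvalue (mx2 p r r s) a -> (p - a) * (s - a) = r ^+ 2.
Proof.
move/eigenvalueP => [v hv vn0].
have e0 := congr1 (fun M : 'M[R]_(1,2) => M 0 0) hv; have e1 := congr1 (fun M : 'M[R]_(1,2) => M 0 1) hv.
rewrite /= !rowmx2 !mxE in e0 e1.
have hv2 : v 0 0 != 0 \/ v 0 1 != 0.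
  case: (eqVneq (v 0 0) 0) => h0; last by left.
  case: (eqVneq (v 0 1) 0) => h1; last by right.
  exfalso; move/negP: vn0; apply; apply/eqP/matrixP => i j.
  rewrite mxE; rewrite [i]ord1.
  case: j => [[|[|//]] Hj].
    by rewrite -h0; congr (v _ _); apply/val_inj.
  by rewrite -h1; congr (v _ _); apply/val_inj.
set Dc := (p - a) * (s - a) - r ^+ 2.
have h0 : v 0 0 * Dc = 0.
  have -> : v 0 0 * Dc = (s - a) * (v 0 0 * p + v 0 1 * r - a * v 0 0)
     - r * (v 0 0 * r + v 0 1 * s - a * v 0 1) by rewrite /Dc; ring.
  by rewrite e0 e1 !subrr !mulr0 subr0.
have h1 : v 0 1 * Dc = 0.
  have -> : v 0 1 * Dc = (p - a) * (v 0 0 * r + v 0 1 * s - a * v 0 1)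
     - r * (v 0 0 * p + v 0 1 * r - a * v 0 0) by rewrite /Dc; ring.
  by rewrite e0 e1 !subrr !mulr0 subr0.
have : Dc = 0.
  case: hv2 => hn; [move: h0 | move: h1]; move/eqP; rewrite mulf_eq0 (negbTE hn) /=;
  by move/eqP.
by rewrite /Dc => /eqP; rewrite subr_eq0 => /eqP.
Qed.

Lemma lmin p r s : r != 0 -> 0 < p -> 0 < s -> 0 < p * s - r ^+ 2 ->
  let mu := (p + s) / 2 - Num.sqrt ((p - s) ^+ 2 + 4 * r ^+ 2) / 2 in
  lambda_min (mx2 p r r s) = mu /\ 0 < mu /\
  (forall z : 'cV[R]_2, mu * (z 0 0 ^+ 2 + z 1 0 ^+ 2) <= qform (mx2 p r r s) z).
Proof.
move=> rn0 hp hs hdet mu.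
set D := (p - s) ^+ 2 + 4 * r ^+ 2.
set dl := Num.sqrt D / 2.
have hD : 0 <= D by rewrite /D; apply: addr_ge0; [exact: sqr_ge0 | apply: mulr_ge0 => //; exact: sqr_ge0].
have hdl0 : 0 <= dl by rewrite /dl divr_ge0 // sqrtr_ge0.
have hdl2 : dl ^+ 2 = D / 4.
  by rewrite /dl expr_div_n sqr_sqrtr //; congr (_ / _); ring.
have hmu : mu = (p + s) / 2 - dl by rewrite /mu /dl.
have r2 : 0 < r ^+ 2 by rewrite exprn_even_gt0 //.
have lb : forall a, eigenvalue (mx2 p r r s) a -> mu <= a.
  move=> a /eig2 ha; rewrite hmu.
  have e : (a - (p + s) / 2) ^+ 2 = dl ^+ 2.
    rewrite hdl2 /D; apply/eqP; rewrite -subr_eq0; apply/eqP.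
    have -> : (a - (p + s) / 2) ^+ 2 - ((p - s) ^+ 2 + 4 * r ^+ 2) / 4 =
       (p - a) * (s - a) - r ^+ 2 by field.
    by rewrite ha subrr.
  nra.
have mueig : eigenvalue (mx2 p r r s) mu.
  apply/eigenvalueP; exists (\row_(j < 2) nth 0 [:: r; mu - p] j).
    apply/matrixP => i j; rewrite [i]ord1.
    have e : (mu - (p + s) / 2) ^+ 2 = dl ^+ 2 by rewrite hmu; ring.
    rewrite hdl2 /D in e.
    case: j => [[|[|//]] Hj].
      have -> : Ordinal Hj = 0 by apply/val_inj.
      rewrite (rowmx2 _ _ _ _ _).1 !mxE /=; ring.
    have -> : Ordinal Hj = 1 by apply/val_inj.
    rewrite (rowmx2 _ _ _ _ _).2 !mxE /=.
    apply/eqP; rewrite -subr_eq0; apply/eqP.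
    have -> : r * r + (mu - p) * s - mu * (mu - p) =
       - ((mu - (p + s) / 2) ^+ 2 - ((p - s) ^+ 2 + 4 * r ^+ 2) / 4) by field.
    by rewrite e subrr oppr0.
  apply/negP => /eqP /matrixP /(_ 0 0); rewrite !mxE /= => /eqP.
  by rewrite (negbTE rn0).
have hinf : lambda_min (mx2 p r r s) = mu.
  apply/eqP; rewrite eq_le; apply/andP; split.
    apply: (ge_inf (E := [set a : R | eigenvalue (mx2 p r r s) a])) => //.
    by exists mu => a /lb.
  by apply: lb_le_inf; [exists mu | move=> a /lb].
have mupos : 0 < mu.
  rewrite hmu subr_gt0.
  have hm : 0 < (p + s) / 2 by rewrite divr_gt0 // addr_gt0.
  have : dl ^+ 2 < ((p + s) / 2) ^+ 2.
    rewrite hdl2 /D; rewrite -subr_gt0.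
    have -> : ((p + s) / 2) ^+ 2 - ((p - s) ^+ 2 + 4 * r ^+ 2) / 4 = p * s - r ^+ 2 by field.
    done.
  nra.
split => //; split => // z.
rewrite qformE.
have e : (p - mu) * (s - mu) = r ^+ 2 by exact: eig2.
have hpm : 0 < p - mu.
  rewrite hmu.
  have : ((p - s) / 2) ^+ 2 < dl ^+ 2.
    rewrite hdl2 /D -subr_gt0.
    have -> : ((p - s) ^+ 2 + 4 * r ^+ 2) / 4 - ((p - s) / 2) ^+ 2 = r ^+ 2 by field.
    done.
  nra.
set z0 := z 0 0; set z1 := z 1 0.
have : 0 <= (p - mu) * (z0 * (p * z0 + r * z1) + z1 * (r * z0 + s * z1) - mu * (z0 ^+ 2 + z1 ^+ 2)).
  have -> : (p - mu) * (z0 * (p * z0 + r * z1) + z1 * (r * z0 + s * z1) - mu * (z0 ^+ 2 + z1 ^+ 2))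
     = ((p - mu) * z0 + r * z1) ^+ 2 + ((p - mu) * (s - mu) - r ^+ 2) * z1 ^+ 2 by ring.
  by rewrite e subrr mul0r addr0 sqr_ge0.
rewrite pmulr_rge0 // subr_ge0 //.
Qed.

Lemma cs2 (x0 x1 A B : R) : (x0 * A + x1 * B) ^+ 2 <= (x0 ^+ 2 + x1 ^+ 2) * (A ^+ 2 + B ^+ 2).
Proof.
rewrite -subr_ge0.
have -> : (x0 ^+ 2 + x1 ^+ 2) * (A ^+ 2 + B ^+ 2) - (x0 * A + x1 * B) ^+ 2 = (x0 * B - x1 * A) ^+ 2 by ring.
exact: sqr_ge0.
Qed.

Lemma spec a b c d (z : 'cV[R]_2) :
  0 <= spectral_norm (mx2 a b c d) /\
  qform (mx2 a b c d) z ^+ 2 <= spectral_norm (mx2 a b c d) ^+ 2 * (z 0 0 ^+ 2 + z 1 0 ^+ 2) ^+ 2.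
Proof.
set S := [set eucl_norm (mx2 a b c d *m x) | x in [set x : 'cV[R]_2 | eucl_norm x = 1]].
have elt : forall x : 'cV[R]_2, eucl_norm x = 1 ->
    (x 0 0 ^+ 2 + x 1 0 ^+ 2 = 1) /\
    S (Num.sqrt ((a * x 0 0 + b * x 1 0) ^+ 2 + (c * x 0 0 + d * x 1 0) ^+ 2)).
  move=> x hx; split.
    move: hx; rewrite euclE => hx.
    by rewrite -(@sqr_sqrtr _ (x 0 0 ^+ 2 + x 1 0 ^+ 2)) ?hx ?expr1n // addr_ge0 // sqr_ge0.
  by exists x => //; rewrite euclE !mx2_vec.
pose e0 : 'cV[R]_2 := \col_(i < 2) nth 0 [:: 1; 0] i.
have he0 : eucl_norm e0 = 1 by rewrite euclE !mxE /= expr1n expr0n addr0 sqrtr1.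
have hsup : has_sup S.
  split; first by exists (eucl_norm (mx2 a b c d *m e0)); exists e0.
  exists (Num.sqrt ((a ^+ 2 + c ^+ 2) + (b ^+ 2 + d ^+ 2))).
  move=> y [x hx <-]; rewrite euclE !mx2_vec.
  have [h1 _] := elt x hx.
  rewrite ler_sqrt; last by rewrite !addr_ge0 // sqr_ge0.
  have := cs2 (x 0 0) (x 1 0) a b; have := cs2 (x 0 0) (x 1 0) c d.
  have := cs2 a b (x 0 0) (x 1 0); have := cs2 c d (x 0 0) (x 1 0).
  rewrite h1 !mul1r.
  move=> _ _ h3 h4. 
  have e1 : a * x 0 0 + b * x 1 0 = x 0 0 * a + x 1 0 * b by ring.
  have e2 : c * x 0 0 + d * x 1 0 = x 0 0 * c + x 1 0 * d by ring.
  have := cs2 a b (x 0 0) (x 1 0); have := cs2 c d (x 0 0) (x 1 0).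
  rewrite h1 !mulr1 => h5 h6.
  have -> : a ^+ 2 + c ^+ 2 + (b ^+ 2 + d ^+ 2) = (a ^+ 2 + b ^+ 2) + (c ^+ 2 + d ^+ 2) by ring.
  exact: lerD.
set sn := spectral_norm (mx2 a b c d).
have ub : forall x : 'cV[R]_2, eucl_norm x = 1 ->
    (a * x 0 0 + b * x 1 0) ^+ 2 + (c * x 0 0 + d * x 1 0) ^+ 2 <= sn ^+ 2 /\ 0 <= sn.
  move=> x hx; have [h1 h2] := elt x hx.
  have := sup_upper_bound hsup h2.
  rewrite -/(spectral_norm _) -/sn => hle.
  have h0 := sqrtr_ge0 ((a * x 0 0 + b * x 1 0) ^+ 2 + (c * x 0 0 + d * x 1 0) ^+ 2).
  split; last exact: le_trans h0 hle.
  rewrite -[X in X <= _](@sqr_sqrtr _); last by rewrite addr_ge0 // sqr_ge0.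
  by rewrite lerXn2r // ?nnegrE //; apply: le_trans h0 hle.
have sn0 : 0 <= sn by have [] := ub e0 he0.
split => //.
rewrite qformE.
set z0 := z 0 0; set z1 := z 1 0.
have [/eqP n0|nn0] := eqVneq (z0 ^+ 2 + z1 ^+ 2) 0.
  have : z0 = 0 /\ z1 = 0 by nra.
  by case => -> ->; rewrite !(mul0r, mulr0, addr0) expr0n /= addr0 expr0n /= mulr0.
have n2pos : 0 < z0 ^+ 2 + z1 ^+ 2 by rewrite lt0r nn0 addr_ge0 // sqr_ge0.
set n := Num.sqrt (z0 ^+ 2 + z1 ^+ 2).
have npos : 0 < n by rewrite sqrtr_gt0.
have hn2 : n ^+ 2 = z0 ^+ 2 + z1 ^+ 2 by rewrite sqr_sqrtr // ltW.
pose x := n^-1 *: z.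
have hx0 : x 0 0 = z0 / n by rewrite mxE mulrC.
have hx1 : x 1 0 = z1 / n by rewrite mxE mulrC.
have hx : eucl_norm x = 1.
  rewrite euclE hx0 hx1 !expr_div_n -mulrDl -hn2 divff ?sqrtr1 //.
  by rewrite expf_neq0 // gt_eqF.
have [hY _] := ub x hx.
rewrite hx0 hx1 in hY.
set x0 := z0 / n in hY; set x1 := z1 / n in hY.
have ez0 : z0 = n * x0 by rewrite /x0 mulrC divfK // gt_eqF.
have ez1 : z1 = n * x1 by rewrite /x1 mulrC divfK // gt_eqF.
have hxx : x0 ^+ 2 + x1 ^+ 2 = 1.
  rewrite /x0 /x1 !expr_div_n -mulrDl -hn2 divff //.
  by rewrite expf_neq0 // gt_eqF.
have cs := cs2 x0 x1 (a * x0 + b * x1) (c * x0 + d * x1).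
rewrite hxx mul1r in cs.
rewrite -hn2 ez0 ez1.
have -> : (n * x0 * (a * (n * x0) + b * (n * x1)) + n * x1 * (c * (n * x0) + d * (n * x1))) ^+ 2
   = (n ^+ 2) ^+ 2 * (x0 * (a * x0 + b * x1) + x1 * (c * x0 + d * x1)) ^+ 2 by ring.
rewrite [X in _ <= X]mulrC; apply: ler_wpM2l; first by rewrite sqr_ge0.
exact: le_trans cs hY.
Qed.



Lemma is_derive_ext (f g : R -> R) (df dg : R) :
  is_derive (0:R) (1:R) f df -> f =1 g -> df = dg -> is_derive (0:R) (1:R) g dg.
Proof. by move=> h /funext <- <-. Qed.

Lemma scE (a b : R) : a *: b = a * b. Proof. by []. Qed.

Lemma der_cst (x : R) : is_derive (0:R) 1 (fun _ : R => x) 0.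
Proof. exact: is_derive_cst. Qed.

Lemma der_add (f g : R -> R) df dg : is_derive (0:R) 1 f df -> is_derive (0:R) 1 g dg ->
  is_derive (0:R) 1 (fun t => f t + g t) (df + dg).
Proof. move=> hf hg; exact: is_deriveD hf hg. Qed.

Lemma der_mul (f g : R -> R) df dg : is_derive (0:R) 1 f df -> is_derive (0:R) 1 g dg ->
  is_derive (0:R) 1 (fun t => f t * g t) (f 0 * dg + g 0 * df).
Proof. move=> hf hg; exact: is_deriveM hf hg. Qed.

Lemma der_lin (x y : R) : is_derive (0:R) 1 (fun t : R => x + t * y) y.
Proof.
have h1 : is_derive (0:R) (1:R) id (1:R) by exact: is_derive_id.
have := der_add (der_cst x) (der_mul h1 (der_cst y)).
move/is_derive_ext; apply => //=; ring.
Qed.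

Lemma der_ln (g : R -> R) dg : 0 < g 0 -> is_derive (0:R) 1 g dg ->
  is_derive (0:R) 1 (fun t => ln (g t)) (dg / g 0).
Proof.
move=> g0 hg.
move/is_derive_ext: (is_derive1_comp (is_derive1_ln g0) hg); apply => //=.
by rewrite mulrC.
Qed.

Lemma der_exp (g : R -> R) dg : is_derive (0:R) 1 g dg ->
  is_derive (0:R) 1 (fun t => expR (g t)) (expR (g 0) * dg).
Proof.
move=> hg.
by move/is_derive_ext: (is_derive1_comp (is_derive_expR (g 0)) hg); apply.
Qed.

Lemma der_main (p r s k d e z0 z1 f0 f1 : R) :
  0 < 1 + (z0*(p*z0 + r*z1) + z1*(r*z0+s*z1)) ->
  is_derive (0:R) 1 (fun t => ln (1 + ((z0 + t*f0)*(p*(z0+t*f0) + r*(z1+t*f1))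
     + (z1+t*f1)*(r*(z0+t*f0) + s*(z1+t*f1)))) + k*(expR(d + t*e) - (d + t*e) - 1))
  ((f0*(p*z0+r*z1) + z0*(p*f0+r*f1) + f1*(r*z0+s*z1) + z1*(r*f0+s*f1))
    / (1 + (z0*(p*z0 + r*z1) + z1*(r*z0+s*z1))) + k*(expR d * e - e)).
Proof.
move=> hq.
have l0 := der_lin z0 f0; have l1 := der_lin z1 f1.
have hQ := der_add (der_cst 1)
   (der_add (der_mul l0 (der_add (der_mul (der_cst p) l0) (der_mul (der_cst r) l1)))
            (der_mul l1 (der_add (der_mul (der_cst r) l0) (der_mul (der_cst s) l1)))).
have hL := der_ln _ hQ.
have hE := der_mul (der_cst k) (der_add (der_add (der_exp (der_lin d e)) (der_mul (der_cst (-1)) (der_lin d e))) (der_cst (-1))).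
have hL2 := hL ltac:(rewrite /= !mul0r !addr0; exact hq).
have := der_add hL2 hE.
move/is_derive_ext; apply.
- move=> t /=; ring.
- rewrite /= !(mul0r, mulr0, addr0, add0r); congr (_ / _ + _); ring.
Qed.


Lemma final (N n2 q u w sn mu b : R) : 0 <= n2 -> 0 <= sn -> 0 < mu -> mu * n2 <= q ->
  w ^+ 2 <= sn ^+ 2 * n2 ^+ 2 -> N = - n2 + u * w -> b = sn ^+ 2 / (2 * mu) ->
  N / (1 + q) - b * u ^+ 2 <= (- (1/2) * n2 - b * u ^+ 2) / (1 + q).
Proof.
move=> n20 sn0 mu0 hq hw hN hb.
have q0 : 0 <= q by apply: le_trans hq; rewrite mulr_ge0 // ltW.
have q1 : 0 < 1 + q by rewrite ltr_wpDr.
have bmu : b * mu = sn ^+ 2 / 2 by rewrite hb; field; rewrite gt_eqF.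
have b0 : 0 <= b by rewrite hb divr_ge0 // ?sqr_ge0 // mulr_ge0 // ltW.
rewrite -subr_ge0.
have -> : (- (1/2) * n2 - b * u ^+ 2) / (1 + q) - (N / (1 + q) - b * u ^+ 2)
   = (n2 / 2 + b * u ^+ 2 * q - u * w) / (1 + q).
  by rewrite hN; field; rewrite gt_eqF.
apply: divr_ge0; last exact: ltW.
have h1 : b * u ^+ 2 * (mu * n2) <= b * u ^+ 2 * q by rewrite ler_wpM2l // mulr_ge0 // sqr_ge0.
have h2 : b * u ^+ 2 * (mu * n2) = sn ^+ 2 * u ^+ 2 * n2 / 2.
  have -> : sn ^+ 2 * u ^+ 2 * n2 / 2 = (sn ^+ 2 / 2) * u ^+ 2 * n2 by ring.
  by rewrite -bmu; ring.
set T := n2 / 2 + sn ^+ 2 * u ^+ 2 * n2 / 2.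
have T1 : sn * u * n2 <= T.
  rewrite -subr_ge0.
  have -> : T - sn * u * n2 = n2 / 2 * (1 - sn * u) ^+ 2 by rewrite /T; field.
  by rewrite mulr_ge0 ?divr_ge0 ?sqr_ge0.
have T2 : - (sn * u * n2) <= T.
  rewrite -subr_ge0.
  have -> : T - - (sn * u * n2) = n2 / 2 * (1 + sn * u) ^+ 2 by rewrite /T; field.
  by rewrite mulr_ge0 ?divr_ge0 ?sqr_ge0.
have uw : u * w <= T.
  have e : (u * w) ^+ 2 <= (sn * u * n2) ^+ 2.
    have -> : (sn * u * n2) ^+ 2 = u ^+ 2 * (sn ^+ 2 * n2 ^+ 2) by ring.
    by rewrite exprMn ler_wpM2l // sqr_ge0.
  nra.
have : u * w <= n2 / 2 + b * u ^+ 2 * q.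
  apply: (le_trans uw); rewrite /T lerD2l -h2 //.
by rewrite subr_ge0.
Qed.

End Helpers.

Theorem mainTheorem4 (R : realType) (w0 al wd : R)
  (hw0 : 0 < w0) (hal : 0 < al) (hwd : 0 < wd) :
  (Pmat w0 al)^T = Pmat w0 al /\ posdef (Pmat w0 al) /\
  Pmat w0 al *m (J0 w0 + Lam al) + (J0 w0 + Lam al)^T *m Pmat w0 al = - 1%:M /\
  (forall (z : 'cV[R]_2) (d : R),
     derivable (Vline w0 al wd z d) 0 1 /\
     derive1 (Vline w0 al wd z d) 0 <=
       (- (1 / 2) * eucl_norm z ^+ 2 - bconst w0 al * (expR d - 1) ^+ 2)
       / (1 + qform (Pmat w0 al) z)).
Proof.
set p := al / (4 * w0 ^+ 2) + 2 / al.
set r := 1 / (2 * w0).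
set s := 2 / al.
have hP : Pmat w0 al = mx2 p r r s by [].
have w0n : w0 != 0 by rewrite gt_eqF.
have aln : al != 0 by rewrite gt_eqF.
have rn0 : r != 0 by rewrite /r div1r invr_eq0 mulf_neq0.
have hp : 0 < p by rewrite /p addr_gt0 // divr_gt0 // mulr_gt0 // exprn_gt0.
have hs : 0 < s by rewrite /s divr_gt0.
have hdet : 0 < p * s - r ^+ 2.
  have -> : p * s - r ^+ 2 = 1 / (4 * w0 ^+ 2) + 4 / al ^+ 2.
    by rewrite /p /s /r; field; rewrite w0n aln.
  by rewrite addr_gt0 // divr_gt0 // ?mulr_gt0 // exprn_gt0.
have [hlm [mupos hq]] := @lmin R p r s rn0 hp hs hdet.
set mu := (p + s) / 2 - _ in hlm mupos hq.
split; first by rewrite hP mx2_tr.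
split.
  split; first by rewrite hP mx2_tr.
  move=> x xn0.
  have n2pos : 0 < x 0 0 ^+ 2 + x 1 0 ^+ 2.
    rewrite lt0r addr_ge0 ?sqr_ge0 // andbT.
    apply/negP => /eqP h.
    have [h0 h1] : x 0 0 = 0 /\ x 1 0 = 0 by nra.
    move/negP: xn0; apply; apply/eqP/matrixP => i j.
    rewrite mxE [j]ord1.
    case: i => [[|[|//]] Hi].
      by rewrite -h0; congr (x _ _); apply/val_inj.
    by rewrite -h1; congr (x _ _); apply/val_inj.
  by apply: lt_le_trans (hq x); rewrite mulr_gt0.
split.
  rewrite hP /J0 /Lam !mx2_add mx2_tr !mx2_mul mx2_add mx2_opp1.
  by congr mx2; rewrite /p /r /s; field; rewrite w0n aln.
move=> z d.
set f := fz w0 al z d.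
set k := bconst w0 al / wd.
set e := fd wd d.
have hV : forall t, (fun t => ln (1 + ((z 0 0 + t * f 0 0) * (p * (z 0 0 + t * f 0 0) + r * (z 1 0 + t * f 1 0))
     + (z 1 0 + t * f 1 0) * (r * (z 0 0 + t * f 0 0) + s * (z 1 0 + t * f 1 0))))
     + k * (expR (d + t * e) - (d + t * e) - 1)) t = Vline w0 al wd z d t.
  by move=> t; rewrite /Vline /Vfun hP qformE !mxE.
have q0 : 0 <= qform (mx2 p r r s) z.
  apply: le_trans (hq z); apply: mulr_ge0; [exact: ltW | by rewrite addr_ge0 // sqr_ge0].
have q1 : 0 < 1 + (z 0 0 * (p * z 0 0 + r * z 1 0) + z 1 0 * (r * z 0 0 + s * z 1 0)).
  by rewrite -qformE ltr_wpDr.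
have hd := is_derive_ext (@der_main R p r s k d e (z 0 0) (z 1 0) (f 0 0) (f 1 0) q1) hV erefl.
split; first exact: (@ex_derive _ _ _ _ _ _ _ hd).
rewrite derive1E (@derive_val _ _ _ _ _ _ _ hd).
set B := bconst w0 al.
have hk : k * (expR d * e - e) = - (B * (expR d - 1) ^+ 2).
  by rewrite /k /e /fd /B; field; rewrite gt_eqF.
rewrite hk hP qformE euclE sqr_sqrtr; last by rewrite addr_ge0 // sqr_ge0.
have hB : B = spectral_norm (mx2 (p * 0 + r * 0) (p * 0 + r * - (al / 2)) (r * 0 + s * 0) (r * 0 + s * - (al / 2))
     + mx2 (0 * p + 0 * r) (0 * r + 0 * s) (0 * p + - (al / 2) * r) (0 * r + - (al / 2) * s)) ^+ 2 / (2 * mu).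
  by rewrite /B /bconst /Gmat hP /Lam mx2_tr !mx2_mul hlm.
rewrite mx2_add in hB.
move: hB; set G := mx2 _ _ _ _ => hB.
have [sn0 hw] := spec (R:=R) (p * 0 + r * 0 + (0 * p + 0 * r)) (p * 0 + r * - (al / 2) + (0 * r + 0 * s))
   (r * 0 + s * 0 + (0 * p + - (al / 2) * r)) (r * 0 + s * - (al / 2) + (0 * r + - (al / 2) * s)) z.
have hq' := hq z.
rewrite qformE in hq'.
apply: (@final R _ _ _ _ _ _ _ _ _ sn0 mupos hq' hw _ hB).
  by rewrite addr_ge0 // sqr_ge0.
have addE : forall (A B : 'cV[R]_2) i, (A + B) i 0 = A i 0 + B i 0 by move=> *; rewrite mxE.
have sclE : forall (c : R) (A : 'cV[R]_2) i, (c *: A) i 0 = c * A i 0 by move=> *; rewrite mxE.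
rewrite qformE /f /fz /J0 /Lam mx2_add !addE !sclE !mx2_vec.
by rewrite /p /r /s; field; rewrite w0n aln.
Qed.
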